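(* Let $w,v\in\Sigma^*$ and $k\in\mathbb{N}$ with $w\equiv_k v$. Consider a play of the $k$-round Ehrenfeucht–Fraïssé game on $\mathfrak{A}_w$ and $\mathfrak{A}_v$ in which Duplicator follows a winning strategy, and let $a_r$ and $b_r$ be the elements of $\mathfrak{A}_w$ and $\mathfrak{A}_v$, respectively, chosen in round $r$. If for some $r\in\{1,\dots,k\}$ either $a_r\in\mathsf{Facs}(w)$ and $r+|a_r|-1<k$, or $b_r\in\mathsf{Facs}(v)$ and $r+|b_r|-1<k$, then $a_r=b_r$.
   Context: $\Sigma$ is a fixed finite alphabet. For $w \in \Sigma^*$, $\mathsf{Facs}(w)$ is the set of all factors (contiguous subwords, including $\varepsilon$ and $w$) of $w$; $|u|$ is the length of $u$. The structure $\mathfrak{A}_w$ representing $w$ has universe $\mathsf{Facs}(w)\cup\{\perp\}$, a ternary relation $R_\circ=\{(x,y,z)\in\mathsf{Facs}(w)^3 : x=y\cdot z\}$, for each letter $\mathtt{a}\in\Sigma$ a constant interpreted as $\mathtt{a}$ if $\mathtt{a}$ occurs in $w$ and as $\perp$ otherwise, and a constant $\varepsilon$ interpreted as the empty word. The $k$-round Ehrenfeucht–Fraïssé game on $\mathfrak{A}_w,\mathfrak{A}_v$: in each round $i$, Spoiler picks one of the two structures and an element of its universe, Duplicator answers with an element of the other structure's universe; let $a_i$ (in $\mathfrak{A}_w$) and $b_i$ (in $\mathfrak{A}_v$) be the chosen elements. Duplicator wins if the tuples $(a_1,\dots,a_k,\vec c^{\,\mathfrak{A}_w})$ and $(b_1,\dots,b_k,\vec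 c^{\,\mathfrak{A}_v})$, where $\vec c$ lists the interpretations of all constants, form a partial isomorphism: for all indices $i,j,l$, $a_i$ equals the interpretation of a constant $c$ iff $b_i$ equals the interpretation of $c$; $a_i=a_j$ iff $b_i=b_j$; and $a_i=a_j\cdot a_l$ iff $b_i=b_j\cdot b_l$. We write $w\equiv_k v$ if Duplicator has a winning strategy in the $k$-round game, i.e. a strategy guaranteeing a win against every play of Spoiler. *)

(* Defs.v *)
From mathcomp Require Import all_boot.
Set Implicit Arguments. Unset Strict Implicit. Unset Printing Implicit Defensive.

Section EFGame.
Variable Sigma : finType.

(* Elements of A_w: None = bottom, Some u = the word u (meaningful when u is a factor of w). *)
Definition elt := option (seq Sigma).

Definition in_univ (w : seq Sigma) (x : elt) : bool :=
  match x with None => true | Some u => infix u w end.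

Definition concatR (x y z : elt) : bool :=
  match x, y, z with
  | Some x', Some y', Some z' => x' == y' ++ z'
  | _, _, _ => false
  end.

(* Interpretations of all constants: first ε, then each letter a of Sigma
   (interpreted as the word [a] if a occurs in w, else ⊥). *)
Definition consts (w : seq Sigma) : seq elt :=
  Some [::] :: [seq (if a \in w then Some [:: a] else None) | a <- enum Sigma].

(* Partial isomorphism between (a_1..a_n, c^{A_w}) and (b_1..b_n, c^{A_v}):
   over all indices of the extended tuples, equality and R_∘ are preserved
   and reflected. *)
Definition partial_iso (w v : seq Sigma) (p : seq (elt * elt)) : Prop :=
  let A := map fst p ++ consts w in
  let B := map snd p ++ consts v in
  forall i j l, i < size A -> j < size A -> l < size A ->
    ((nth None A i == nth None A j) = (nth None B i == nth None B j)) /\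
    (concatR (nth None A i) (nth None A j) (nth None A l) =
     concatR (nth None B i) (nth None B j) (nth None B l)).

(* A Duplicator strategy: given the history of previous rounds (pairs (a_i,b_i)),
   the structure Spoiler chose (true = A_w, false = A_v) and Spoiler's element,
   return Duplicator's answer in the other structure. *)
Definition dstrategy := seq (elt * elt) -> bool -> elt -> elt.

(* A sequence of Spoiler moves (structure, element). Since Duplicator's strategy
   is deterministic, adaptive Spoiler play amounts to such a sequence. *)
Fixpoint play_from (sigma : dstrategy) (hist : seq (elt * elt))
    (s : seq (bool * elt)) : seq (elt * elt) :=
  match s with
  | [::] => hist
  | (true, x) :: s' => play_from sigma (rcons hist (x, sigma hist true x)) s'
  | (false, y) :: s' => play_from sigma (rcons hist (sigma hist false y, y)) s'
  end.

Definition play (sigma : dstrategy) (s : seq (bool * elt)) := play_from sigma [::] s.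

Definition legal_spoiler (w v : seq Sigma) (s : seq (bool * elt)) : bool :=
  all (fun m : bool * elt => if m.1 then in_univ w m.2 else in_univ v m.2) s.

Definition winning (w v : seq Sigma) (k : nat) (sigma : dstrategy) : Prop :=
  forall s : seq (bool * elt), size s = k -> legal_spoiler w v s ->
    all (fun p : elt * elt => in_univ w p.1 && in_univ v p.2) (play sigma s) /\
    partial_iso w v (play sigma s).

Definition ef_equiv (k : nat) (w v : seq Sigma) : Prop :=
  exists sigma : dstrategy, winning w v k sigma.

End EFGame.

(* Main.v *)
Require Import Defs.
From mathcomp Require Import all_boot.
From mathcomp Require Import zify.

Section Helpers.
Variable Sigma : finType.
Implicit Types (sigma : dstrategy Sigma) (w v : seq Sigma).

Lemma play_from_cat sigma h s1 s2 :
  play_from sigma h (s1 ++ s2) = play_from sigma (play_from sigma h s1) s2.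
Proof. by elim: s1 h => [|[[] x] s1 IH] h //=. Qed.

Lemma play_from_ext sigma h s : exists t, play_from sigma h s = h ++ t.
Proof.
elim: s h => [|[[] x] s IH] h /=; first by exists [::]; rewrite cats0.
- have [t ->] := IH (rcons h (x, sigma h true x)).
  by exists ((x, sigma h true x) :: t); rewrite -cats1 -catA.
- have [t ->] := IH (rcons h (sigma h false x, x)).
  by exists ((sigma h false x, x) :: t); rewrite -cats1 -catA.
Qed.

Lemma size_play_from sigma h s : size (play_from sigma h s) = size h + size s.
Proof.
elim: s h => [|[[] x] s IH] h /=; rewrite ?addn0 // IH size_rcons addSnnS //.
Qed.

Lemma size_play sigma s : size (play sigma s) = size s.
Proof. by rewrite /play size_play_from. Qed.

Lemma play_prefix sigma s1 s2 i : i < size s1 ->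
  nth (None, None) (play sigma (s1 ++ s2)) i = nth (None, None) (play sigma s1) i.
Proof.
move=> hi; rewrite /play play_from_cat.
have [t ->] := play_from_ext sigma (play_from sigma [::] s1) s2.
by rewrite nth_cat size_play_from add0n hi.
Qed.

Lemma play_last sigma s1 b x s2 :
  nth (None, None) (play sigma (s1 ++ (b, x) :: s2)) (size s1) =
  if b then (x, sigma (play sigma s1) true x) else (sigma (play sigma s1) false x, x).
Proof.
rewrite /play play_from_cat; case: b => /=;
  [have [t ->] := play_from_ext sigma (rcons (play_from sigma [::] s1)
     (x, sigma (play_from sigma [::] s1) true x)) s2
  |have [t ->] := play_from_ext sigma (rcons (play_from sigma [::] s1)
     (sigma (play_from sigma [::] s1) false x, x)) s2];
  by rewrite nth_cat size_rcons size_play_from add0n ltnSn nth_rcons size_play_from add0n ltnn eqxx.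
Qed.

Lemma nthA_p (f : elt Sigma * elt Sigma -> elt Sigma) w p i : i < size p ->
  nth None (map f p ++ consts w) i = f (nth (None, None) p i).
Proof. by move=> hi; rewrite nth_cat size_map hi (nth_map (None, None)). Qed.

Lemma nthA_eps (f : elt Sigma * elt Sigma -> elt Sigma) w p :
  nth None (map f p ++ consts w) (size p) = Some [::].
Proof. by rewrite nth_cat size_map ltnn subnn. Qed.

Lemma nthA_let (f : elt Sigma * elt Sigma -> elt Sigma) w p x :
  nth None (map f p ++ consts w) (size p + (index x (enum Sigma)).+1) =
  if x \in w then Some [:: x] else None.
Proof.
rewrite nth_cat size_map ltnNge leq_addr /= addKn /=.
by rewrite (nth_map x) ?index_mem ?mem_enum // nth_index ?mem_enum.
Qed.

Lemma size_A (f : elt Sigma * elt Sigma -> elt Sigma) w p :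
  size (map f p ++ consts w) = size p + (size (enum Sigma)).+1.
Proof. by rewrite size_cat size_map /= size_map. Qed.

Lemma key w v k sigma : winning w v k sigma -> forall n s r,
  size s = k -> legal_spoiler w v s -> 0 < r -> r + n - 1 < k ->
  ((exists u, size u = n /\ (nth (None, None) (play sigma s) r.-1).1 = Some u /\ infix u w) \/
   (exists u, size u = n /\ (nth (None, None) (play sigma s) r.-1).2 = Some u /\ infix u v)) ->
  (nth (None, None) (play sigma s) r.-1).1 = (nth (None, None) (play sigma s) r.-1).2.
Proof.
move=> Hwin; elim=> [|n IH] s r Hs Hleg r0 rk H.
- have [_ Hp] := Hwin s Hs Hleg.
  have sP : size (play sigma s) = k by rewrite size_play.
  have ri : r.-1 < size (play sigma s) by lia.
  have hk : size (play sigma s) < size (map fst (play sigma s) ++ consts w).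
    by rewrite size_A; lia.
  have [He _] := Hp r.-1 (size (play sigma s)) 0 (leq_trans ri (ltnW hk)) hk
    (leq_ltn_trans (leq0n _) hk).
  move: He; rewrite !nthA_eps (nthA_p fst w _ _ ri) (nthA_p snd v _ _ ri).
  case: H => [[u [su [ha _]]]|[u [su [hb _]]]].
  + move: su ha => /size0nil -> ->; rewrite eqxx => /esym/eqP ->; done.
  + move: su hb => /size0nil -> ->; rewrite eqxx => /eqP ->; done.
- have rk' : r < k by lia.
  have sTake : size (take r s) = r by rewrite size_takel // Hs; lia.
  have Hpre : forall s2, nth (None, None) (play sigma s) r.-1 =
                         nth (None, None) (play sigma (take r s ++ s2)) r.-1.
    move=> s2; rewrite -{1}(cat_take_drop r s) !play_prefix // sTake; lia.
  have legT : all (fun m : bool * elt Sigma => if m.1 then in_univ w m.2 else in_univ v m.2)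
                 (take r s).
    by move: Hleg; rewrite /legal_spoiler -{1}(cat_take_drop r s) all_cat => /andP[].
  case: H => [[u [su [ha hu]]]|[u [su [hb hu]]]].
  + case/lastP: u su ha hu => [//|u' x] su ha hu.
    move: su; rewrite size_rcons => -[su].
    set s' := take r s ++ (true, Some u') :: nseq (k - r.+1) (true, None).
    have Hs' : size s' = k by rewrite /s' size_cat sTake /= size_nseq; lia.
    have Hleg' : legal_spoiler w v s'.
      rewrite /legal_spoiler /s' all_cat legT /= all_nseq orbT andbT.
      exact: infix_trans (infix_rcons u' x) hu.
    have Aj : (nth (None, None) (play sigma s') r).1 = Some u'.
      by have := play_last sigma (take r s) _ (Some u') (nseq (k - r.+1) (true, None)); rewrite sTake => ->.
    have IHj := IH s' r.+1 Hs' Hleg' isT ltac:(lia) (or_introl (ex_intro _ u' (conj su (conj Aj (infix_trans (infix_rcons u' x) hu))))).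
    simpl in IHj.
    have [_ Hp] := Hwin s' Hs' Hleg'.
    have sP : size (play sigma s') = k by rewrite size_play.
    have xw : x \in w by apply: (mem_infix hu); rewrite mem_rcons mem_head.
    set l := size (play sigma s') + (index x (enum Sigma)).+1.
    have hl : l < size (map fst (play sigma s') ++ consts w).
      by rewrite size_A ltn_add2l ltnS index_mem mem_enum.
    have [_ Hc] := Hp r.-1 r l ltac:(rewrite size_A; lia) ltac:(rewrite size_A; lia) hl.
    have i1 : r.-1 < size (play sigma s') by rewrite sP; lia.
    have i2 : r < size (play sigma s') by rewrite sP; lia.
    move: Hc; rewrite (nthA_p fst w _ _ i1) (nthA_p snd v _ _ i1) (nthA_p fst w _ _ i2) (nthA_p snd v _ _ i2).
    rewrite /l !nthA_let xw -IHj Aj -(Hpre _) ha /= -cats1 eqxx.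
    case: (nth _ _ _).2 => [b|] //=; case: (x \in v) => //= /esym/eqP -> //.
  + case/lastP: u su hb hu => [//|u' x] su hb hu.
    move: su; rewrite size_rcons => -[su].
    set s' := take r s ++ (false, Some u') :: nseq (k - r.+1) (true, None).
    have Hs' : size s' = k by rewrite /s' size_cat sTake /= size_nseq; lia.
    have Hleg' : legal_spoiler w v s'.
      rewrite /legal_spoiler /s' all_cat legT /= all_nseq orbT andbT.
      exact: infix_trans (infix_rcons u' x) hu.
    have Bj : (nth (None, None) (play sigma s') r).2 = Some u'.
      by have := play_last sigma (take r s) _ (Some u') (nseq (k - r.+1) (true, None)); rewrite sTake => ->.
    have IHj := IH s' r.+1 Hs' Hleg' isT ltac:(lia) (or_intror (ex_intro _ u' (conj su (conj Bj (infix_trans (infix_rcons u' x) hu))))).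
    simpl in IHj.
    have [_ Hp] := Hwin s' Hs' Hleg'.
    have sP : size (play sigma s') = k by rewrite size_play.
    have xv : x \in v by apply: (mem_infix hu); rewrite mem_rcons mem_head.
    set l := size (play sigma s') + (index x (enum Sigma)).+1.
    have hl : l < size (map fst (play sigma s') ++ consts w).
      by rewrite size_A ltn_add2l ltnS index_mem mem_enum.
    have [_ Hc] := Hp r.-1 r l ltac:(rewrite size_A; lia) ltac:(rewrite size_A; lia) hl.
    have i1 : r.-1 < size (play sigma s') by rewrite sP; lia.
    have i2 : r < size (play sigma s') by rewrite sP; lia.
    move: Hc; rewrite (nthA_p fst w _ _ i1) (nthA_p snd v _ _ i1) (nthA_p fst w _ _ i2) (nthA_p snd v _ _ i2).
    rewrite /l !nthA_let xv IHj Bj -(Hpre _) hb /= -cats1 eqxx.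
    case: (nth _ _ _).1 => [b|] //=; case: (x \in w) => //= /eqP -> //.
Qed.

End Helpers.

Theorem lemma4p2 (Sigma : finType) (w v : seq Sigma) (k : nat)
    (sigma : dstrategy Sigma) :
  ef_equiv k w v -> winning w v k sigma ->
  forall s : seq (bool * elt Sigma), size s = k -> legal_spoiler w v s ->
  forall r : nat, 1 <= r <= k ->
  let a_r := (nth (None, None) (play sigma s) r.-1).1 in
  let b_r := (nth (None, None) (play sigma s) r.-1).2 in
  ((exists u, a_r = Some u /\ infix u w /\ r + size u - 1 < k) \/
   (exists u, b_r = Some u /\ infix u v /\ r + size u - 1 < k)) ->
  a_r = b_r.
Proof.
move=> _ Hwin s Hs Hleg r /andP[r0 rk] a_r b_r H.
rewrite /a_r /b_r in H *.
case: H => [[u [ha [hu hk]]]|[u [hb [hu hk]]]].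
- apply: (@key _ w v k sigma Hwin (size u) s r Hs Hleg r0 hk); left; by exists u.
- apply: (@key _ w v k sigma Hwin (size u) s r Hs Hleg r0 hk); right; by exists u.
Qed.
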